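(* Let $a\geq b\geq c\geq d>0$. If $ad-bc>0$, then $$\frac{H(a,b)}{H(c,d)}<\frac{G(a,b)}{G(c,d)}<\frac{L(a,b)}{L(c,d)}<\frac{I(a,b)}{I(c,d)}<\frac{A(a,b)}{A(c,d)}.$$ If $ad-bc<0$, all these inequalities are reversed (strictly), and if $ad-bc=0$, all of them become equalities.
   Context: For $u,v>0$: $A(u,v)=\frac{u+v}{2}$, $G(u,v)=\sqrt{uv}$, $H(u,v)=\frac{2}{1/u+1/v}$; the logarithmic mean is $L(u,v)=\frac{u-v}{\ln u-\ln v}$ if $u\neq v$ and $L(u,u)=u$; the identric mean is $I(u,v)=\frac{1}{e}\left(\frac{u^u}{v^v}\right)^{1/(u-v)}$ if $u\neq v$ and $I(u,u)=u$. *)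

(* Defs.v *)
From Stdlib Require Import Reals.
Open Scope R_scope.

Definition AM (u v : R) : R := (u + v) / 2.
Definition GM (u v : R) : R := sqrt (u * v).
Definition HM (u v : R) : R := 2 / (/ u + / v).
Definition LM (u v : R) : R :=
  if Req_EM_T u v then u else (u - v) / (ln u - ln v).
Definition IM (u v : R) : R :=
  if Req_EM_T u v then u
  else / exp 1 * Rpower (Rpower u u / Rpower v v) (/ (u - v)).

(* Main.v *)
Require Import Defs.
From Stdlib Require Import Reals.
Open Scope R_scope.
From Stdlib Require Import Lra.
From Coquelicot Require Import Coquelicot.
Open Scope R_scope.

Definition sh (x : R) : R := (exp x - exp (- x)) / 2.
Definition ch (x : R) : R := (exp x + exp (- x)) / 2.

Lemma incr0 (f df : R -> R) :
  (forall x, 0 < x -> is_derive f x (df x)) ->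
  (forall x, 0 < x -> df x > 0) -> continuity_pt f 0 ->
  forall x y, 0 <= y -> y < x -> f y < f x.
Proof.
  intros Hd Hp Hc.
  assert (Hs : forall x y, 0 < y -> y < x -> f y < f x).
  { intros x y Hy Hxy.
    apply (incr_function f (Finite 0) p_infty df); simpl; auto.
 }
  intros x y Hy Hxy.
  destruct Hy as [Hy|Hy]; [apply Hs; auto|].
  subst y.
  assert (H0 : f 0 <= f (x/2)).
  { destruct (Rle_or_lt (f 0) (f (x/2))) as [H|H]; auto.
    destruct (Hc (f 0 - f (x/2))) as [al [Hal H1]]; [lra|].
    set (r := Rmin (al/2) (x/4)).
    assert (Hr0 : 0 < r) by (unfold r; apply Rmin_pos; lra).
    assert (Hr1 : r <= x/4) by (unfold r; apply Rmin_r).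
    assert (Hr2 : r <= al/2) by (unfold r; apply Rmin_l).
    assert (H2 := H1 r).
    assert (H3 : f r < f (x/2)) by (apply Hs; lra).
    simpl in H2; unfold R_dist in H2.
    assert (H4 : Rabs (f r - f 0) < f 0 - f (x / 2)).
    { apply H2. split. split; [exact I| lra].
      rewrite Rminus_0_r, Rabs_pos_eq; lra. }
    apply Rabs_def2 in H4. lra. }
  assert (f (x/2) < f x) by (apply Hs; lra). lra.
Qed.

Lemma d_sh x : is_derive sh x (ch x).
Proof. unfold sh, ch. auto_derive; auto. lra. Qed.
Lemma d_ch x : is_derive ch x (sh x).
Proof. unfold sh, ch. auto_derive; auto. lra. Qed.

Lemma cont_of (f df : R -> R) x : (forall y, is_derive f y (df y)) -> continuity_pt f x.
Proof. intros H. apply continuity_pt_filterlim. apply (@ex_derive_continuous R_AbsRing R_NormedModule).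
  exists (df x). apply H. Qed.

Lemma ch_pos x : 0 < ch x.
Proof. unfold ch. assert (0 < exp x) by apply exp_pos. assert (0 < exp (-x)) by apply exp_pos. lra. Qed.

Lemma sh_pos x : 0 < x -> 0 < sh x.
Proof. intros H. unfold sh. assert (exp (-x) < exp x) by (apply exp_increasing; lra). lra. Qed.

Lemma ch_sh x : ch x * ch x - sh x * sh x = 1.
Proof. unfold ch, sh. rewrite exp_Ropp. assert (exp x <> 0) by (apply Rgt_not_eq, exp_pos). field. auto. Qed.

Lemma sh_gt x : 0 < x -> x < sh x.
Proof.
  intros Hx.
  assert (H := incr0 (fun y => sh y - y) (fun y => ch y - 1)).
  assert (H0: sh 0 - 0 < sh x - x).
  { apply H; try lra.
    - intros y _. apply (is_derive_minus sh (fun y => y)). apply d_sh. 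
      apply (is_derive_id y).
    - intros y Hy. assert (Hc := ch_sh y). assert (Hs := sh_pos y Hy).
      assert (Hc2 := ch_pos y). nra.
    - apply (cont_of _ (fun y => ch y - 1)). intros y.
      apply (is_derive_minus sh (fun y => y)). apply d_sh. apply (is_derive_id y). }
  unfold sh in H0 at 1. rewrite Ropp_0, Rminus_diag in H0. lra.
Qed.

Lemma xch_gt x : 0 < x -> sh x < x * ch x.
Proof.
  intros Hx.
  assert (H := incr0 (fun y => y * ch y - sh y) (fun y => y * sh y)).
  assert (Hd : forall y, is_derive (fun y => y * ch y - sh y) y (y * sh y)).
  { intros y. unfold sh, ch. auto_derive; auto. lra. }
  assert (H0: 0 * ch 0 - sh 0 < x * ch x - sh x).
  { apply H; try lra.
    - intros y _; apply Hd.
    - intros y Hy. assert (Hs := sh_pos y Hy). nra.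
    - apply (cont_of _ _ 0 Hd). }
  unfold sh in H0 at 1. rewrite Ropp_0, Rminus_diag in H0. lra.
Qed.

Definition S (x : R) : R := if Req_EM_T x 0 then 1 else sh x / x.

Lemma S0 : S 0 = 1.
Proof. unfold S. destruct (Req_EM_T 0 0); auto. lra. Qed.

Lemma S_pos x : 0 < x -> S x = sh x / x.
Proof. intros H. unfold S. destruct (Req_EM_T x 0); auto. lra. Qed.

Lemma S_gt0 x : 0 <= x -> 0 < S x.
Proof. intros [H|H]. rewrite S_pos; auto. apply Rdiv_lt_0_compat; auto. apply sh_pos; auto.
  subst; rewrite S0; lra. Qed.

Lemma S_cont0 : continuity_pt S 0.
Proof.
  assert (Hd : derivable_pt_lim sh 0 1).
  { apply is_derive_Reals. replace 1 with (ch 0). apply d_sh.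
    unfold ch. rewrite Ropp_0, exp_0. lra. }
  intros eps Heps. destruct (Hd eps Heps) as [del Hdel].
  exists del. split. apply cond_pos.
  intros x [[_ Hx0] Hx]. simpl in *. unfold R_dist in *.
  rewrite S0. unfold S. destruct (Req_EM_T x 0). congruence.
  assert (H := Hdel x (not_eq_sym Hx0)). rewrite Rminus_0_r in Hx.
  specialize (H Hx). rewrite Rplus_0_l in H.
  replace (sh 0) with 0 in H. rewrite Rminus_0_r in H. exact H.
  unfold sh. rewrite Ropp_0. lra.
Qed.

Lemma ln_cont x : 0 < x -> continuity_pt ln x.
Proof. intros H. apply derivable_continuous_pt. exists (/x). apply derivable_pt_lim_ln; auto. Qed.

Lemma loc_pos x : 0 < x -> locally x (fun y => 0 < y).
Proof.
  intros H. exists (mkposreal x H). intros y Hy.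
  unfold ball in Hy; simpl in Hy; unfold AbsRing_ball, abs, minus, plus, opp in Hy; simpl in Hy.
  apply Rabs_def2 in Hy. lra.
Qed.

Lemma phi1_incr x y : 0 <= y -> y < x -> ch y < ch x.
Proof.
  intros; apply (incr0 ch sh); auto.
  - intros; apply d_ch.
  - intros; apply sh_pos; auto.
  - apply (cont_of _ sh 0 d_ch).
Qed.

Lemma phi2_incr x y : 0 <= y -> y < x -> S y < S x.
Proof.
  intros; apply (incr0 S (fun x => (x * ch x - sh x)/(x*x))); auto.
  - intros z Hz. apply (is_derive_ext_loc (fun y => sh y / y)).
    + generalize (loc_pos z Hz). apply filter_imp. intros u Hu. rewrite S_pos; auto.
    + unfold sh, ch. auto_derive. lra. field. lra.
  - intros z Hz. assert (H1 := xch_gt z Hz). apply Rdiv_lt_0_compat; nra.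
  - apply S_cont0.
Qed.

Definition phi3 (s : R) := ch s / S s - ln (S s).
Definition phi4 (s : R) := ln (ch s) - ch s / S s.

Lemma exp_gt1 z : 0 < z -> 1 < exp z.
Proof. intros; rewrite <- exp_0; apply exp_increasing; auto. Qed.

Lemma phi3_incr x y : 0 <= y -> y < x -> phi3 y < phi3 x.
Proof.
  intros; apply (incr0 phi3 (fun x => 1/x - x/(sh x * sh x))); auto.
  - intros z Hz. apply (is_derive_ext_loc (fun y => ch y / (sh y / y) - ln (sh y / y))).
    + generalize (loc_pos z Hz). apply filter_imp. intros u Hu. unfold phi3. rewrite S_pos; auto.
    + assert (Hs := sh_pos z Hz). assert (He : exp z <> 0) by (apply Rgt_not_eq, exp_pos).
      assert (Hq : 0 < sh z / z) by (apply Rdiv_lt_0_compat; auto).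
      assert (H1 := exp_gt1 z Hz).
      unfold sh, ch in *. auto_derive.
      * unfold Rminus, Rdiv in *. repeat split; auto; lra.
      * rewrite !exp_Ropp in *. field. repeat split; auto; try lra; apply Rgt_not_eq; nra.
  - intros z Hz. assert (H1 := sh_gt z Hz).
    apply Rlt_gt. replace (1/z - z/(sh z * sh z)) with ((sh z * sh z - z*z)/(z*(sh z * sh z))) by (field; lra).
    apply Rdiv_lt_0_compat. nra. apply Rmult_lt_0_compat. lra. nra.
  - unfold phi3. 
    assert (H1 : continuity_pt (minus_fct (fun s => ch s / S s) (fun s => ln (S s))) 0).
    { apply continuity_pt_minus.
      - apply (continuity_pt_div ch S). apply (cont_of _ sh 0 d_ch). apply S_cont0.
        rewrite S0; lra.
      - apply (continuity_pt_comp S ln). apply S_cont0. rewrite S0. apply ln_cont; lra. }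
    exact H1.
Qed.

Lemma phi4_incr x y : 0 <= y -> y < x -> phi4 y < phi4 x.
Proof.
  intros; apply (incr0 phi4 (fun x => (x * ch x - sh x)/(sh x * sh x * ch x))); auto.
  - intros z Hz. apply (is_derive_ext_loc (fun y => ln (ch y) - ch y / (sh y / y))).
    + generalize (loc_pos z Hz). apply filter_imp. intros u Hu. unfold phi4. rewrite S_pos; auto.
    + assert (Hs := sh_pos z Hz). assert (He : exp z <> 0) by (apply Rgt_not_eq, exp_pos).
      assert (Hq : 0 < sh z / z) by (apply Rdiv_lt_0_compat; auto).
      assert (Hc := ch_pos z).
      assert (H1 := exp_gt1 z Hz).
      unfold sh, ch in *. auto_derive.
      * unfold Rminus, Rdiv in *. repeat split; auto; lra.
      * rewrite !exp_Ropp in *. field. repeat split; auto; try lra; apply Rgt_not_eq; nra.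
  - intros z Hz. assert (H1 := xch_gt z Hz). assert (Hs := sh_pos z Hz). assert (Hc := ch_pos z).
    apply Rdiv_lt_0_compat. lra. apply Rmult_lt_0_compat; nra.
  - unfold phi4. 
    assert (H1 : continuity_pt (minus_fct (fun s => ln (ch s)) (fun s => ch s / S s)) 0).
    { apply continuity_pt_minus.
      - apply (continuity_pt_comp ch ln). apply (cont_of _ sh 0 d_ch). apply ln_cont, ch_pos.
      - apply (continuity_pt_div ch S). apply (cont_of _ sh 0 d_ch). apply S_cont0.
        rewrite S0; lra. }
    exact H1.
Qed.

Lemma ch0 : ch 0 = 1.
Proof. unfold ch. rewrite Ropp_0, exp_0. lra. Qed.

Lemma GM_rep w s : GM (exp (w+s)) (exp (w-s)) = exp w.
Proof. unfold GM. rewrite <- exp_plus. replace (w + s + (w - s)) with (w + w) by ring.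
  rewrite exp_plus. apply sqrt_square. left; apply exp_pos. Qed.

Lemma AM_rep w s : AM (exp (w+s)) (exp (w-s)) = exp w * ch s.
Proof. unfold AM, ch. unfold Rminus. rewrite !exp_plus. field. Qed.

Lemma HM_rep w s : HM (exp (w+s)) (exp (w-s)) = exp w * / ch s.
Proof. unfold HM, ch. unfold Rminus. rewrite !exp_plus. rewrite exp_Ropp.
  assert (0 < exp w) by apply exp_pos. assert (0 < exp s) by apply exp_pos.
  field. repeat split; try lra; apply Rgt_not_eq; nra. Qed.

Lemma LM_rep w s : LM (exp (w+s)) (exp (w-s)) = exp w * S s.
Proof. unfold LM, S. destruct (Req_EM_T (exp (w + s)) (exp (w - s))) as [E|E];
  destruct (Req_EM_T s 0) as [E2|E2].
  - subst s. rewrite Rplus_0_r. ring.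
  - apply exp_inv in E. lra.
  - subst s. rewrite Rplus_0_r, Rminus_0_r in E. congruence.
  - rewrite !ln_exp. unfold sh. unfold Rminus. rewrite !exp_plus. field. lra.
Qed.

Lemma IM_rep w s : IM (exp (w+s)) (exp (w-s)) = exp w * exp (ch s / S s - 1).
Proof. unfold IM, S. destruct (Req_EM_T (exp (w + s)) (exp (w - s))) as [E|E];
  destruct (Req_EM_T s 0) as [E2|E2].
  - subst s. rewrite Rplus_0_r, ch0. replace (1/1 - 1) with 0 by field. rewrite exp_0. ring.
  - apply exp_inv in E. lra.
  - subst s. rewrite Rplus_0_r, Rminus_0_r in E. congruence.
  - unfold Rpower. rewrite !ln_exp.
    assert (Hr: forall A B, exp A / exp B = exp (A - B)) by (intros; unfold Rminus; rewrite exp_plus, exp_Ropp; auto).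
    rewrite Hr, ln_exp. rewrite <- exp_Ropp, <- !exp_plus. f_equal.
    assert (Hne : exp (w+s) - exp (w-s) <> 0) by (intro H; apply E; lra).
    assert (Hu : exp (w+s) = exp w * exp s) by apply exp_plus.
    assert (Hv : exp (w-s) = exp w * / exp s) by (unfold Rminus; rewrite exp_plus, exp_Ropp; auto).
    rewrite Hu, Hv in *.
    assert (0 < exp s) by apply exp_pos. assert (0 < exp w) by apply exp_pos.
    assert (Hs : exp s * exp s - 1 <> 0).
    { intro H1. apply Hne. field_simplify; [|lra]. replace (exp w * exp s ^ 2 - exp w) with (exp w * (exp s * exp s - 1)) by ring. rewrite H1. field. lra. }
    unfold ch, sh. rewrite exp_Ropp. field.
    repeat split; try lra. replace (exp w * exp s * exp s - exp w) with (exp w * (exp s * exp s - 1)) by ring. apply Rmult_integral_contrapositive; split; lra.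
Qed.

Lemma cmp_lt E1 E2 m1 m2 n1 n2 : 0 < E1 -> 0 < E2 -> 0 < m1 -> 0 < m2 -> 0 < n1 -> 0 < n2 ->
  n2 / m2 < n1 / m1 -> E1 * m1 / (E2 * m2) < E1 * n1 / (E2 * n2).
Proof.
  intros. assert (n2 * m1 < n1 * m2).
  { apply Rmult_lt_reg_r with (/ (m1 * m2)). apply Rinv_0_lt_compat; nra.
    replace (n2 * m1 * / (m1 * m2)) with (n2 / m2) by (field; lra).
    replace (n1 * m2 * / (m1 * m2)) with (n1 / m1) by (field; lra). auto. }
  apply Rmult_lt_reg_r with (E2 * m2 * (E2 * n2) / E1). 
  apply Rdiv_lt_0_compat; [|auto]. apply Rmult_lt_0_compat; apply Rmult_lt_0_compat; auto.
  replace (E1 * m1 / (E2 * m2) * (E2 * m2 * (E2 * n2) / E1)) with (E2 * (m1 * n2)) by (field; lra).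
  replace (E1 * n1 / (E2 * n2) * (E2 * m2 * (E2 * n2) / E1)) with (E2 * (n1 * m2)) by (field; lra).
  apply Rmult_lt_compat_l; lra.
Qed.

Lemma cmp_eq E1 E2 m n : 0 < E1 -> 0 < E2 -> 0 < m -> 0 < n ->
  E1 * m / (E2 * m) = E1 * n / (E2 * n).
Proof. intros. field. lra. Qed.

Definition r3 s := exp (ch s / S s - 1).

Lemma GM_rep' w s : GM (exp (w+s)) (exp (w-s)) = exp w * 1.
Proof. rewrite GM_rep; ring. Qed.

Lemma rho1 x y : 0 <= y -> y < x -> 1 / / ch y < 1 / / ch x.
Proof. intros. assert (H1 := ch_pos x). assert (H2 := ch_pos y).
  replace (1 / / ch y) with (ch y) by (field; lra). replace (1 / / ch x) with (ch x) by (field; lra).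
  apply phi1_incr; auto. Qed.

Lemma rho2 x y : 0 <= y -> y < x -> S y / 1 < S x / 1.
Proof. intros. rewrite !Rdiv_1_r. apply phi2_incr; auto. Qed.

Lemma rho3e s : 0 <= s -> r3 s / S s = exp (phi3 s - 1).
Proof. intros. unfold r3, phi3. rewrite <- (exp_ln (S s)) at 2 by (apply S_gt0; auto).
  unfold Rdiv at 1. rewrite <- exp_Ropp, <- exp_plus. f_equal. ring. Qed.

Lemma rho3 x y : 0 <= y -> y < x -> r3 y / S y < r3 x / S x.
Proof. intros. rewrite !rho3e by lra. apply exp_increasing.
  assert (phi3 y < phi3 x) by (apply phi3_incr; auto). lra. Qed.

Lemma rho4e s : 0 <= s -> ch s / r3 s = exp (phi4 s + 1).
Proof. intros. unfold r3, phi4. rewrite <- (exp_ln (ch s)) at 1 by apply ch_pos.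
  unfold Rdiv at 1. rewrite <- exp_Ropp, <- exp_plus. f_equal. ring. Qed.

Lemma rho4 x y : 0 <= y -> y < x -> ch y / r3 y < ch x / r3 x.
Proof. intros. rewrite !rho4e by lra. apply exp_increasing.
  assert (phi4 y < phi4 x) by (apply phi4_incr; auto). lra. Qed.

Lemma IM_rep' w s : IM (exp (w+s)) (exp (w-s)) = exp w * r3 s.
Proof. rewrite IM_rep; reflexivity. Qed.

Lemma cmp_gt E1 E2 m1 m2 n1 n2 : 0 < E1 -> 0 < E2 -> 0 < m1 -> 0 < m2 -> 0 < n1 -> 0 < n2 ->
  n1 / m1 < n2 / m2 -> E1 * n1 / (E2 * n2) < E1 * m1 / (E2 * m2).
Proof.
  intros. apply cmp_lt; auto.
  replace (m2 / n2) with (/ (n2 / m2)) by (field; lra).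
  replace (m1 / n1) with (/ (n1 / m1)) by (field; lra).
  apply Rinv_lt_contravar; auto. apply Rmult_lt_0_compat; apply Rdiv_lt_0_compat; auto.
Qed.

Lemma core w1 s1 w2 s2 : 0 <= s1 -> 0 <= s2 ->
  let a := exp (w1+s1) in let b := exp (w1-s1) in let c := exp (w2+s2) in let d := exp (w2-s2) in
  (s1 > s2 ->
     HM a b / HM c d < GM a b / GM c d /\
     GM a b / GM c d < LM a b / LM c d /\
     LM a b / LM c d < IM a b / IM c d /\
     IM a b / IM c d < AM a b / AM c d) /\
  (s1 < s2 ->
     HM a b / HM c d > GM a b / GM c d /\
     GM a b / GM c d > LM a b / LM c d /\
     LM a b / LM c d > IM a b / IM c d /\
     IM a b / IM c d > AM a b / AM c d) /\
  (s1 = s2 ->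
     HM a b / HM c d = GM a b / GM c d /\
     GM a b / GM c d = LM a b / LM c d /\
     LM a b / LM c d = IM a b / IM c d /\
     IM a b / IM c d = AM a b / AM c d).
Proof.
  intros H1 H2 a b c d. unfold a, b, c, d.
  rewrite !HM_rep, !GM_rep', !LM_rep, !IM_rep', !AM_rep.
  assert (0 < exp w1) by apply exp_pos. assert (0 < exp w2) by apply exp_pos.
  assert (0 < ch s1) by apply ch_pos. assert (0 < ch s2) by apply ch_pos.
  assert (0 < / ch s1) by (apply Rinv_0_lt_compat; auto).
  assert (0 < / ch s2) by (apply Rinv_0_lt_compat; auto).
  assert (0 < S s1) by (apply S_gt0; auto). assert (0 < S s2) by (apply S_gt0; auto).
  assert (0 < r3 s1) by apply exp_pos. assert (0 < r3 s2) by apply exp_pos.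
  assert (0 < 1) by lra.
  split; [|split].
  - intros Hs. repeat split; apply cmp_lt; auto.
    apply rho1; auto. apply rho2; auto. apply rho3; auto. apply rho4; auto.
  - intros Hs. unfold Rgt. repeat split; apply cmp_gt; auto.
    apply rho1; auto. apply rho2; auto. apply rho3; auto. apply rho4; auto.
  - intros Hs. subst s2. repeat split; apply cmp_eq; auto.
Qed.

Theorem theorem3p4 (a b c d : R) :
  a >= b -> b >= c -> c >= d -> d > 0 ->
  (a * d - b * c > 0 ->
     HM a b / HM c d < GM a b / GM c d /\
     GM a b / GM c d < LM a b / LM c d /\
     LM a b / LM c d < IM a b / IM c d /\
     IM a b / IM c d < AM a b / AM c d) /\
  (a * d - b * c < 0 ->
     HM a b / HM c d > GM a b / GM c d /\
     GM a b / GM c d > LM a b / LM c d /\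
     LM a b / LM c d > IM a b / IM c d /\
     IM a b / IM c d > AM a b / AM c d) /\
  (a * d - b * c = 0 ->
     HM a b / HM c d = GM a b / GM c d /\
     GM a b / GM c d = LM a b / LM c d /\
     LM a b / LM c d = IM a b / IM c d /\
     IM a b / IM c d = AM a b / AM c d).
Proof.
  intros Hab Hbc Hcd Hd.
  assert (Hd0 : 0 < d) by lra. assert (Hc0 : 0 < c) by lra.
  assert (Hb0 : 0 < b) by lra. assert (Ha0 : 0 < a) by lra.
  set (w1 := (ln a + ln b)/2). set (s1 := (ln a - ln b)/2).
  set (w2 := (ln c + ln d)/2). set (s2 := (ln c - ln d)/2).
  assert (Ea : a = exp (w1 + s1)) by (unfold w1, s1; replace ((ln a + ln b) / 2 + (ln a - ln b) / 2) with (ln a) by field; rewrite exp_ln; auto).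
  assert (Eb : b = exp (w1 - s1)) by (unfold w1, s1; replace ((ln a + ln b) / 2 - (ln a - ln b) / 2) with (ln b) by field; rewrite exp_ln; auto).
  assert (Ec : c = exp (w2 + s2)) by (unfold w2, s2; replace ((ln c + ln d) / 2 + (ln c - ln d) / 2) with (ln c) by field; rewrite exp_ln; auto).
  assert (Ed : d = exp (w2 - s2)) by (unfold w2, s2; replace ((ln c + ln d) / 2 - (ln c - ln d) / 2) with (ln d) by field; rewrite exp_ln; auto).
  assert (Hs1 : 0 <= s1).
  { unfold s1. assert (ln b <= ln a) by (apply ln_le; lra). lra. }
  assert (Hs2 : 0 <= s2).
  { unfold s2. assert (ln d <= ln c) by (apply ln_le; lra). lra. }
  assert (K := core w1 s1 w2 s2 Hs1 Hs2). cbv zeta in K.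
  rewrite <- Ea, <- Eb, <- Ec, <- Ed in K.
  assert (AD : a * d = exp (w1 + s1 + (w2 - s2))) by (rewrite exp_plus; congruence).
  assert (BC : b * c = exp (w1 - s1 + (w2 + s2))) by (rewrite exp_plus; congruence).
  destruct K as [K1 [K2 K3]].
  split; [|split].
  - intros H. apply K1. assert (exp (w1 - s1 + (w2 + s2)) < exp (w1 + s1 + (w2 - s2))) by lra.
    apply exp_lt_inv in H0. lra.
  - intros H. apply K2. assert (exp (w1 + s1 + (w2 - s2)) < exp (w1 - s1 + (w2 + s2))) by lra.
    apply exp_lt_inv in H0. lra.
  - intros H. apply K3. assert (exp (w1 + s1 + (w2 - s2)) = exp (w1 - s1 + (w2 + s2))) by lra.
    apply exp_inv in H0. lra.
Qed.
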